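(* In the iAPG setting described in the context, assume $\mu>0$, fix $c\in(0,1)$ and $\varepsilon_0>0$, and suppose $\varepsilon_k=\frac{\varepsilon_0}{k+1}\sqrt{\prod_{j=0}^{k-1}(1-c\alpha_j)}$ for all $k\ge1$. Let $\kappa=\frac{L_g}{\gamma_{\mathrm{dec}}\mu}$, $\psi_0=F(x^{(0)})-F^*+(1-(1-c)\alpha_0)\frac{\gamma_0}{2}\|x^*-z^{(0)}\|^2$, $S=\frac{\sqrt\kappa}{2(1-c)^2\underline L}\sum_{k=0}^\infty\frac{\varepsilon_0^2}{(k+1)^2}$, and $\delta_k=\sqrt{\prod_{j=0}^{k-1}(1-c\alpha_j)}\sqrt{\frac{2(\psi_0+S)}{\mu}}$ (empty product $=1$). For $y\in\mathbb R^n$, $\eta>0$ define $\Phi(x;y,\eta)=\langle\nabla g(y),x-y\rangle+\frac1{2\eta}\|x-y\|^2+h(x)+r(x)$ and $x_*^{(k+1)}=\arg\min_x\Phi(x;y^{(k)},\eta_k)$. Then $$\Phi(x^{(k)};y^{(k)},\eta_k)-\Phi(x_*^{(k+1)};y^{(k)},\eta_k)\le\begin{cases}\frac1{2\underline L}\,\mathrm{dist}\big(0,\partial F(x^{(0)})\big)^2,& k=0,\\[2pt] \frac1{2\underline L}\Big(\varepsilon_{k-1}+\frac{3L_g(\delta_k+\delta_{k-1})}{\gamma_{\mathrm{dec}}\sqrt c}\Big)^2,& k\ge1.\end{cases}$$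
   Context: iAPG setting. Let $g,h:\mathbb R^n\to\mathbb R$ and $r:\mathbb R^n\to\mathbb R\cup\{+\infty\}$, where $g$ is convex, $\mu$-strongly convex for some $\mu\ge0$, and differentiable with $L_g$-Lipschitz gradient ($L_g>0$); $h$ is convex and differentiable with $L_h$-Lipschitz gradient; $r$ is proper, closed and convex. Put $H=h+r$, $F=g+H$, and assume $F$ attains its minimum value $F^*$ at some point $x^*$. Fix constants $\gamma_{\mathrm{dec}}\in(0,1)$ and $\underline L>0$ with $\mu\le\underline L\le L_g$. We consider points $x^{(k)},z^{(k)},y^{(k)}\in\mathbb R^n$ and scalars $\eta_k>0,\alpha_k>0,\gamma_k>0,\varepsilon_k\ge0$ ($k\ge0$) such that $x^{(0)}=z^{(0)}\in\mathrm{dom}(H)$, $\gamma_0\ge\mu$, and for every $k\ge0$: (i) $\gamma_{\mathrm{dec}}/L_g<\eta_k\le1/\underline L$; (ii) $\gamma_{k+1}=\alpha_k^2/\eta_k=(1-\alpha_k)\gamma_k+\alpha_k\mu$; (iii) $y^{(k)}=\frac{1}{\alpha_k\gamma_k+\gamma_{k+1}}\big(\alpha_k\gamma_k z^{(k)}+\gamma_{k+1}x^{(k)}\big)$; (iv) $\mathrm{dist}\big(0,\ \nabla g(y^{(k)})+\tfrac1{\eta_k}(x^{(k+1)}-y^{(k)})+\partial H(x^{(k+1)})\big)\le\varepsilon_k$; (v) $g(x^{(k+1)})\le g(y^{(k)})+\langle\nabla g(y^{(k)}),x^{(k+1)}-y^{(k)}\rangle+\frac1{2\eta_k}\|x^{(k+1)}-y^{(k)}\|^2$;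 (vi) $z^{(k+1)}=x^{(k)}+\frac1{\alpha_k}(x^{(k+1)}-x^{(k)})$. Here $\partial$ denotes the convex subdifferential and $\mathrm{dist}(0,S)=\inf_{s\in S}\|s\|$. *)

(* Defs.v *)
From HB Require Import structures.
From mathcomp Require Import all_boot all_order all_algebra.
From mathcomp Require Import all_classical all_reals all_analysis.
Set Implicit Arguments. Unset Strict Implicit. Unset Printing Implicit Defensive.
Import Order.TTheory GRing.Theory Num.Theory.
Local Open Scope classical_set_scope.
Local Open Scope ring_scope.

Section Defs.
Variables (R : realType) (n : nat).
Local Notation V := 'rV[R]_n.

Definition dot (u v : V) : R := \sum_(i < n) u 0 i * v 0 i.
Definition enorm (u : V) : R := Num.sqrt (dot u u).

Definition is_gradient (f : V -> R) (G : V -> V) : Prop :=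
  forall x (e : R), 0 < e -> exists2 d : R, 0 < d &
    forall h : V, enorm h < d ->
      `| f (x + h) - f x - dot (G x) h | <= e * enorm h.

Definition lipschitz_map (L : R) (G : V -> V) : Prop :=
  forall x y, enorm (G x - G y) <= L * enorm (x - y).

Definition convex_fun (f : V -> R) : Prop :=
  forall (x y : V) (t : R), 0 <= t <= 1 ->
    f (t *: x + (1 - t) *: y) <= t * f x + (1 - t) * f y.

Definition strongly_convex (mu : R) (f : V -> R) : Prop :=
  forall (x y : V) (t : R), 0 <= t <= 1 ->
    f (t *: x + (1 - t) *: y) <=
      t * f x + (1 - t) * f y - mu / 2 * t * (1 - t) * enorm (x - y) ^+ 2.

Definition proper_fun (f : V -> \bar R) : Prop :=
  (exists x, f x < +oo)%E /\ (forall x, f x != -oo%E).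

Definition convex_efun (f : V -> \bar R) : Prop :=
  forall (x y : V) (t : R), 0 < t < 1 ->
    (f (t *: x + (1 - t) *: y)%R <= t%:E * f x + (1 - t)%:E * f y)%E.

(* closed = lower semicontinuous (closed epigraph) *)
Definition closed_efun (f : V -> \bar R) : Prop :=
  forall x (a : R), (a%:E < f x)%E -> exists2 d : R, 0 < d &
    forall y, enorm (y - x) < d -> (a%:E < f y)%E.

Definition subdiff (f : V -> \bar R) (x : V) : set V :=
  [set s | f x \is a fin_num /\ forall y, (f x + (dot s (y - x)%R)%:E <= f y)%E].

(* dist(0, S) = inf_{s in S} ||s||  (= +oo if S is empty) *)
Definition dist0 (S : set V) : \bar R := ereal_inf [set (enorm s)%:E | s in S].

Definition Phi (dg : V -> V) (h : V -> R) (r : V -> \bar R)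
    (x y : V) (eta : R) : \bar R :=
  ((dot (dg y) (x - y) + (2 * eta)^-1 * enorm (x - y) ^+ 2 + h x)%R%:E + r x)%E.

End Defs.

(* Main.v *)
Require Import Defs.
From HB Require Import structures.
From mathcomp Require Import all_boot all_order all_algebra.
From mathcomp Require Import all_classical all_reals all_analysis.
From mathcomp Require Import ring lra.
Import Order.TTheory GRing.Theory Num.Theory.
Local Open Scope classical_set_scope.
Local Open Scope ring_scope.

Lemma dotC {R : realType} {n : nat} (u v : 'rV[R]_n) : dot u v = dot v u.
Proof. by apply: eq_bigr => i _; rewrite mulrC. Qed.

Lemma dot_ge0 {R : realType} {n : nat} (u : 'rV[R]_n) : 0 <= dot u u.
Proof. by apply: sumr_ge0 => i _; rewrite -expr2 sqr_ge0. Qed.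

Lemma enorm_ge0 {R : realType} {n : nat} (u : 'rV[R]_n) : 0 <= enorm u.
Proof. exact: sqrtr_ge0. Qed.

Lemma enorm_sq {R : realType} {n : nat} (u : 'rV[R]_n) : enorm u ^+ 2 = dot u u.
Proof. by rewrite /enorm sqr_sqrtr // dot_ge0. Qed.

Lemma dotDl {R : realType} {n : nat} (u v w : 'rV[R]_n) :
  dot (u + v) w = dot u w + dot v w.
Proof. by rewrite /dot -big_split; apply: eq_bigr => i _; rewrite !mxE mulrDl. Qed.

Lemma dotZl {R : realType} {n : nat} (a : R) (u w : 'rV[R]_n) :
  dot (a *: u) w = a * dot u w.
Proof. by rewrite /dot mulr_sumr; apply: eq_bigr => i _; rewrite !mxE mulrA. Qed.

Lemma dotNl {R : realType} {n : nat} (u w : 'rV[R]_n) :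
  dot (- u) w = - dot u w.
Proof. by rewrite -scaleN1r dotZl mulN1r. Qed.

Lemma dotDr {R : realType} {n : nat} (u v w : 'rV[R]_n) :
  dot w (u + v) = dot w u + dot w v.
Proof. by rewrite dotC dotDl !(dotC w). Qed.

Lemma dotZr {R : realType} {n : nat} (a : R) (u w : 'rV[R]_n) :
  dot w (a *: u) = a * dot w u.
Proof. by rewrite dotC dotZl dotC. Qed.

Lemma dotNr {R : realType} {n : nat} (u w : 'rV[R]_n) :
  dot w (- u) = - dot w u.
Proof. by rewrite dotC dotNl dotC. Qed.

Lemma dotBl {R : realType} {n : nat} (u v w : 'rV[R]_n) :
  dot (u - v) w = dot u w - dot v w.
Proof. by rewrite dotDl dotNl. Qed.

Lemma dotBr {R : realType} {n : nat} (u v w : 'rV[R]_n) :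
  dot w (u - v) = dot w u - dot w v.
Proof. by rewrite dotDr dotNr. Qed.


Lemma quad_disc {R : realType} (a b c : R) : 0 <= c ->
  (forall t, 0 <= a - 2 * t * b + t ^+ 2 * c) -> b ^+ 2 <= a * c.
Proof.
move=> c0 H.
have [c00|cpos] := eqVneq c 0.
  have [b0|bn0] := eqVneq b 0; first by rewrite b0 c00; lra.
  have := H ((a + 1) / (2 * b)).
  have -> : a - 2 * ((a + 1) / (2 * b)) * b = -1 by field.
  rewrite c00; lra.
have cp : 0 < c by rewrite lt_def cpos c0.
have := H (b / c).
have -> : a - 2 * (b / c) * b + (b / c) ^+ 2 * c = (a * c - b ^+ 2) / c by field.
by rewrite pmulr_lge0 ?invr_gt0 // subr_ge0.
Qed.

Lemma CS2 {R : realType} {n : nat} (u v : 'rV[R]_n) :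
  dot u v ^+ 2 <= dot u u * dot v v.
Proof.
rewrite (mulrC (dot u u)); apply: quad_disc; first exact: dot_ge0.
move=> t; have := dot_ge0 (v - t *: u).
rewrite !(dotBl, dotBr, dotZl, dotZr) (dotC v u).
by congr (_ <= _); ring.
Qed.

Lemma CS {R : realType} {n : nat} (u v : 'rV[R]_n) : dot u v <= enorm u * enorm v.
Proof.
rewrite /enorm -sqrtrM ?dot_ge0 //.
have [neg|pos] := ltP (dot u v) 0.
  apply: le_trans (sqrtr_ge0 _); exact: ltW.
by rewrite -(ger0_norm pos) -sqrtr_sqr ler_sqrt ?CS2 // mulr_ge0 // dot_ge0.
Qed.

Ltac merge_sums :=
  rewrite /dot; do 4 rewrite ?(mulr_sumr, mulr_suml) -?sumrN -?big_split /=.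

Lemma phi_ident {R : realType} {n : nat} (G s x y u : 'rV[R]_n) (eta : R) :
  0 < eta ->
  eta / 2 * dot (G + eta^-1 *: (x - y) + s) (G + eta^-1 *: (x - y) + s)
  - (dot G (x - y) + (2 * eta)^-1 * dot (x - y) (x - y)
     - dot G (u - y) - (2 * eta)^-1 * dot (u - y) (u - y)) + dot s (u - x)
  = (2 * eta)^-1 * dot (eta *: (G + eta^-1 *: (x - y) + s) + (u - x))
                       (eta *: (G + eta^-1 *: (x - y) + s) + (u - x)).
Proof.
move=> e0; merge_sums; apply: eq_bigr => i _; rewrite !mxE.
by field; rewrite gt_eqF.
Qed.

Lemma rec_ident {R : realType} {n : nat} (x z xs zp y p e : 'rV[R]_n)
  (al ga gp mu eta : R) :
  0 < al -> 0 < ga -> 0 < gp ->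
  mu = (gp - (1 - al) * ga) / al -> eta = al ^+ 2 / gp ->
  y = (al * ga + gp)^-1 *: (al * ga *: z + gp *: x) ->
  zp = x + al^-1 *: (p - x) ->
  (1 - al) * (dot e (x - p) + eta^-1 * dot (y - p) (x - p) + mu / 2 * dot (x - y) (x - y))
  + al * (dot e (xs - p) + eta^-1 * dot (y - p) (xs - p) + mu / 2 * dot (xs - y) (xs - y))
  - (2 * eta)^-1 * dot (p - y) (p - y)
  - (gp / 2 * dot (xs - zp) (xs - zp) - (1 - al) * ga / 2 * dot (xs - z) (xs - z)
     + al * dot e (xs - zp))
  = (1 - al) * mu / 2 * dot (x - y) (x - y)
    + (1 - al) * ga * al * mu / (2 * gp) * dot (z - y) (z - y).
Proof.
move=> a0 g0 gp0 -> -> -> ->.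
merge_sums; apply: eq_bigr => i _; rewrite !mxE.
field; rewrite ?gt_eqF ?mulf_neq0 //.
by rewrite addr_gt0 ?mulr_gt0.
Qed.

Lemma key_ident {R : realType} {n : nat} (G e u y p : 'rV[R]_n) (eta : R) :
  0 < eta ->
  dot G (u - y) + dot (e - G - eta^-1 *: (p - y)) (u - p) - dot G (p - y)
  = dot e (u - p) + eta^-1 * dot (y - p) (u - p).
Proof.
move=> e0; merge_sums; apply: eq_bigr => i _; rewrite !mxE.
by field; rewrite gt_eqF.
Qed.

Lemma enormZ {R : realType} {n : nat} (a : R) (u : 'rV[R]_n) :
  enorm (a *: u) = `|a| * enorm u.
Proof.
rewrite /enorm dotZl dotZr mulrA -expr2 sqrtrM ?sqr_ge0 //.
by rewrite sqrtr_sqr.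
Qed.

Lemma enormN {R : realType} {n : nat} (u : 'rV[R]_n) : enorm (- u) = enorm u.
Proof. by rewrite -scaleN1r enormZ normrN1 mul1r. Qed.

Lemma enormB {R : realType} {n : nat} (u v : 'rV[R]_n) : enorm (u - v) = enorm (v - u).
Proof. by rewrite -enormN opprB. Qed.

Lemma enorm_le {R : realType} {n : nat} (u : 'rV[R]_n) (b : R) :
  0 <= b -> dot u u <= b ^+ 2 -> enorm u <= b.
Proof.
move=> b0 H; rewrite /enorm -(ger0_norm b0) -sqrtr_sqr ler_sqrt //.
exact: sqr_ge0.
Qed.

Lemma enorm_tri {R : realType} {n : nat} (u v : 'rV[R]_n) :
  enorm (u + v) <= enorm u + enorm v.
Proof.
apply: enorm_le; first by rewrite addr_ge0 ?enorm_ge0.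
rewrite dotDl !dotDr (dotC v u) sqrrD !enorm_sq.
have := CS u v; lra.
Qed.

Lemma minl {R : realType} (a b : R) : Order.min a b <= a.
Proof. by rewrite ge_min lexx. Qed.
Lemma minr {R : realType} (a b : R) : Order.min a b <= b.
Proof. by rewrite ge_min lexx orbT. Qed.

Lemma lim_le {R : realType} (a b C : R) : 0 <= C ->
  (forall e, 0 < e -> exists2 d, 0 < d & forall t, 0 < t -> t < d -> a <= b + e + t * C) ->
  a <= b.
Proof.
move=> C0 H; apply/ler_addgt0Pr => eps epos.
have [d d0 Hd] := H (eps / 2) ltac:(by rewrite divr_gt0).
pose t := Order.min (d / 2) (eps / (2 * (C + 1))).
have tp : 0 < t by rewrite lt_min !divr_gt0 // mulr_gt0 // ltr_wpDl.
have td : t < d.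
  apply: (le_lt_trans (minl _ _)); rewrite ltr_pdivrMr //; lra.
have := Hd t tp td.
have : t * C <= eps / 2.
  have t2 : t <= eps / (2 * (C + 1)) by exact: minr.
  have : t * C <= eps / (2 * (C + 1)) * C by rewrite ler_wpM2r.
  have -> : eps / (2 * (C + 1)) * C = eps / 2 * (C / (C + 1)).
    by field; rewrite gt_eqF // ltr_wpDl.
  have q : C / (C + 1) <= 1 by rewrite ler_pdivrMr ?ltr_wpDl // mul1r; lra.
  move=> H1; apply: (le_trans H1); rewrite -[X in _ <= X](mulr1 (eps / 2)).
  by apply: ler_wpM2l => //; rewrite divr_ge0 //; lra.
lra.
Qed.

Lemma sq_lim {R : realType} (a b K m : R) : 0 <= K -> 0 <= m ->
  (forall rho, 0 < rho -> a <= b + K * (m + rho) ^+ 2) -> a <= b + K * m ^+ 2.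
Proof.
move=> K0 m0 H; apply: (@lim_le _ _ _ 0) => // e e0.
exists (Order.min 1 (e / (K * (2 * m + 1) + 1))).
  by rewrite lt_min ltr01 divr_gt0 // ltr_wpDl // mulr_ge0 //; lra.
move=> t t0 tlt; rewrite mulr0 addr0.
have t1 : t <= 1 by apply: ltW; apply: lt_le_trans tlt (minl _ _).
have t2 : t <= e / (K * (2 * m + 1) + 1).
  by apply: ltW; apply: lt_le_trans tlt (minr _ _).
apply: (le_trans (H t t0)).
have -> : K * (m + t) ^+ 2 = K * m ^+ 2 + t * (K * (2 * m + t)) by ring.
rewrite addrA lerD2l.
have Kp : 0 <= K * (2 * m + t) by rewrite mulr_ge0 //; lra.
have : t * (K * (2 * m + t)) <= t * (K * (2 * m + 1) + 1).
  rewrite ler_pM2l // -subr_ge0.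
  have -> : K * (2 * m + 1) + 1 - K * (2 * m + t) = K * (1 - t) + 1 by ring.
  by rewrite addr_ge0 // mulr_ge0 //; lra.
move/le_trans; apply.
have Q : 0 < K * (2 * m + 1) + 1 by rewrite ltr_wpDl // mulr_ge0 //; lra.
by rewrite -ler_pdivlMr.
Qed.

Lemma grad_dir {R : realType} {n : nat} {f : 'rV[R]_n -> R} {G : 'rV[R]_n -> 'rV[R]_n} :
  is_gradient f G -> forall x d (e : R), 0 < e ->
  exists2 del : R, 0 < del & forall t, 0 < t -> t < del ->
    `|f (x + t *: d) - f x - t * dot (G x) d| <= e * t.
Proof.
move=> Hg x d e e0.
have N1 : 0 < enorm d + 1 by rewrite ltr_wpDl ?enorm_ge0.
have [del del0 H] := Hg x (e / (enorm d + 1)) ltac:(by rewrite divr_gt0).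
exists (del / (enorm d + 1)); first by rewrite divr_gt0.
move=> t t0 tlt.
have nt : enorm (t *: d) = t * enorm d by rewrite enormZ ger0_norm // ltW.
have := H (t *: d); rewrite dotZr nt => H1.
have lt1 : t * enorm d < del.
  move: tlt; rewrite ltr_pdivlMr // => tlt.
  apply: le_lt_trans tlt; rewrite ler_pM2l //; lra.
apply: (le_trans (H1 lt1)).
rewrite mulrA -subr_ge0.
have -> : e * t - e / (enorm d + 1) * t * enorm d = e * t / (enorm d + 1) by field; rewrite gt_eqF.
by rewrite divr_ge0 ?mulr_ge0 //; apply: ltW.
Qed.

Lemma sc_grad {R : realType} {n : nat} (g : 'rV[R]_n -> R) (G : 'rV[R]_n -> 'rV[R]_n) (mu : R) :
  0 <= mu -> strongly_convex mu g -> is_gradient g G -> forall y u,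
  g y + dot (G y) (u - y) + mu / 2 * dot (u - y) (u - y) <= g u.
Proof.
move=> mu0 Hsc Hg y u.
set d := u - y.
apply: (@lim_le _ _ _ (mu / 2 * dot d d)); first by rewrite mulr_ge0 ?dot_ge0 // divr_ge0.
move=> e e0.
have [del del0 Hd] := grad_dir Hg y d _ e0.
exists (Order.min del 1); first by rewrite lt_min del0 ltr01.
move=> t t0 tlt.
have t1 : t < 1 by apply: lt_le_trans tlt (minr _ _).
have td : t < del by apply: lt_le_trans tlt (minl _ _).
have := Hd t t0 td.
have -> : y + t *: d = t *: u + (1 - t) *: y.
  by rewrite /d scalerBr scalerBl scale1r; apply/rowP => i; rewrite !mxE; ring.
move=> /ler_normlP [H1 _].
have := Hsc u y t ltac:(by rewrite !ltW //).
rewrite -enorm_sq enorm_sq -/d => H2.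
have H3 : t * (g y + dot (G y) d + mu / 2 * dot d d) <= t * (g u + e + t * (mu / 2 * dot d d)).
  nra.
by move: H3; rewrite ler_pM2l.
Qed.

Lemma step_lemma {R : realType} {n : nat} (x z xs p y e zp : 'rV[R]_n)
  (Fx Fs Fp al eta ga gp mu c ep : R) :
  0 < al -> al <= 1 -> 0 < eta -> 0 < ga -> 0 < mu -> 0 < c -> c < 1 ->
  gp = al ^+ 2 / eta -> gp = (1 - al) * ga + al * mu ->
  y = (al * ga + gp)^-1 *: (al * ga *: z + gp *: x) ->
  zp = x + al^-1 *: (p - x) ->
  Fp + dot e (x - p) + eta^-1 * dot (y - p) (x - p) - (2 * eta)^-1 * dot (p - y) (p - y)
     + mu / 2 * dot (x - y) (x - y) <= Fx ->
  Fp + dot e (xs - p) + eta^-1 * dot (y - p) (xs - p) - (2 * eta)^-1 * dot (p - y) (p - y)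
     + mu / 2 * dot (xs - y) (xs - y) <= Fs ->
  Fs <= Fp -> enorm e <= ep ->
  (1 - (1 - c) * al) * (Fp - Fs + gp / 2 * dot (xs - zp) (xs - zp)) <=
  (1 - al) * (Fx - Fs + ga / 2 * dot (xs - z) (xs - z)) + al / (2 * (1 - c) * gp) * ep ^+ 2.
Proof.
move=> a0 a1 e0 g0 m0 c0 c1 hgp1 hgp2 hy hzp Ha Hb Hsp He.
have gpp : 0 < gp by rewrite hgp1 divr_gt0 // exprn_gt0.
have Hmu : mu = (gp - (1 - al) * ga) / al by rewrite hgp2; field; rewrite gt_eqF.
have Heta : eta = al ^+ 2 / gp by rewrite hgp1; field; rewrite ?gt_eqF // ?exprn_gt0.
have I := @rec_ident _ _ x z xs zp y p e al ga gp mu eta a0 g0 gpp Hmu Heta hy hzp.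
set Dx := dot (x - y) (x - y) in I.
set Dz := dot (z - y) (z - y) in I.
have Dx0 : 0 <= Dx by exact: dot_ge0.
have Dz0 : 0 <= Dz by exact: dot_ge0.
have C0 : 0 <= (1 - al) * ga * al * mu / (2 * gp) * Dz.
  by rewrite mulr_ge0 // divr_ge0 ?mulr_ge0 //; lra.
have C1 : 0 <= (1 - al) * mu / 2 * Dx by rewrite mulr_ge0 // divr_ge0 ?mulr_ge0 //; lra.
have Hc : (1 - al) * (Fp + dot e (x - p) + eta^-1 * dot (y - p) (x - p)
      - (2 * eta)^-1 * dot (p - y) (p - y) + mu / 2 * Dx)
    + al * (Fp + dot e (xs - p) + eta^-1 * dot (y - p) (xs - p)
      - (2 * eta)^-1 * dot (p - y) (p - y) + mu / 2 * dot (xs - y) (xs - y))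
    <= (1 - al) * Fx + al * Fs.
  apply: lerD; [apply: ler_wpM2l => //; lra | by apply: ler_wpM2l => //; lra].
set N2 := dot (xs - zp) (xs - zp).
have N20 : 0 <= N2 by exact: dot_ge0.
have Hcs : - dot e (xs - zp) <= ep * enorm (xs - zp).
  rewrite -dotNl; apply: (le_trans (CS _ _)); rewrite enormN.
  by apply: ler_wpM2r => //; exact: enorm_ge0.
have Hn : enorm (xs - zp) ^+ 2 = N2 by rewrite enorm_sq.
set N := enorm (xs - zp) in Hcs Hn.
(* Young *)
have Hy : al * (ep * N) <= (1 - c) * al * gp / 2 * N2 + al / (2 * (1 - c) * gp) * ep ^+ 2.
  rewrite -subr_ge0.
  have -> : (1 - c) * al * gp / 2 * N2 + al / (2 * (1 - c) * gp) * ep ^+ 2 - al * (ep * N)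
     = al / (2 * (1 - c) * gp) * ((1 - c) * gp * N - ep) ^+ 2.
    rewrite -Hn; field; rewrite ?gt_eqF //; lra.
  by rewrite mulr_ge0 ?sqr_ge0 // divr_ge0 ?mulr_ge0 //; lra.
have Hae : - (al * dot e (xs - zp)) <= al * (ep * N).
  by rewrite -mulrN; apply: ler_wpM2l => //; lra.
have Hfin : Fp - Fs + gp / 2 * N2 <= (1 - al) * (Fx - Fs)
   + (1 - al) * ga / 2 * dot (xs - z) (xs - z) - al * dot e (xs - zp).
  move: I Hc; rewrite -/Dx -/N2; nra.
have Hq : (1 - (1 - c) * al) * (Fp - Fs) <= Fp - Fs.
  have : 0 <= (1 - c) * al * (Fp - Fs) by rewrite !mulr_ge0 //; lra.
  lra.
lra.
Qed.

Lemma keyR {R : realType} {n : nat} (u y p s G : 'rV[R]_n) (gu gy gp Hu Hp mu eta : R) :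
  0 < eta ->
  gy + dot G (u - y) + mu / 2 * dot (u - y) (u - y) <= gu ->
  Hp + dot s (u - p) <= Hu ->
  gp <= gy + dot G (p - y) + (2 * eta)^-1 * enorm (p - y) ^+ 2 ->
  gp + Hp + dot (G + eta^-1 *: (p - y) + s) (u - p) + eta^-1 * dot (y - p) (u - p)
    - (2 * eta)^-1 * dot (p - y) (p - y) + mu / 2 * dot (u - y) (u - y) <= gu + Hu.
Proof.
move=> e0 Hsc Hs Hd.
have E : G + eta^-1 *: (p - y) + s - G - eta^-1 *: (p - y) = s.
  by apply/rowP => i; rewrite !mxE; ring.
have K := @key_ident _ _ G (G + eta^-1 *: (p - y) + s) u y p eta e0.
rewrite E in K.
rewrite enorm_sq in Hd.
lra.
Qed.

Lemma PhiR {R : realType} {n : nat} (G s x y u : 'rV[R]_n) (eta Hx Hu : R) :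
  0 < eta -> Hx + dot s (u - x) <= Hu ->
  (dot G (x - y) + (2 * eta)^-1 * enorm (x - y) ^+ 2 + Hx)
  - (dot G (u - y) + (2 * eta)^-1 * enorm (u - y) ^+ 2 + Hu)
  <= eta / 2 * enorm (G + eta^-1 *: (x - y) + s) ^+ 2.
Proof.
move=> e0 Hs.
have I := @phi_ident _ _ G s x y u eta e0.
have W : 0 <= (2 * eta)^-1 * dot (eta *: (G + eta^-1 *: (x - y) + s) + (u - x))
                       (eta *: (G + eta^-1 *: (x - y) + s) + (u - x)).
  by rewrite mulr_ge0 ?dot_ge0 // invr_ge0 mulr_ge0 //; apply: ltW.
rewrite !enorm_sq; lra.
Qed.

Lemma fin_of {R : realType} {n : nat} (r : 'rV[R]_n -> \bar R) v :
  proper_fun r -> (r v < +oo)%E -> r v \is a fin_num.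
Proof.
move=> [_ Hp] Hv; rewrite fin_numE Hp /=; by rewrite -ltey.
Qed.

Lemma convD {R : realType} {n : nat} (r : 'rV[R]_n -> \bar R) u w (t : R) :
  proper_fun r -> convex_efun r -> r u \is a fin_num -> r w \is a fin_num ->
  0 < t < 1 ->
  r (t *: u + (1 - t) *: w) \is a fin_num /\
  fine (r (t *: u + (1 - t) *: w)) <= t * fine (r u) + (1 - t) * fine (r w).
Proof.
move=> Hp Hc fu fw ht.
have H := Hc u w t ht.
rewrite -(fineK fu) -(fineK fw) -!EFinM -EFinD in H.
have F : r (t *: u + (1 - t) *: w) \is a fin_num.
  apply: fin_of => //; apply: le_lt_trans H _; exact: ltry.
split => //; by rewrite -lee_fin fineK.
Qed.

Lemma qgrowth {R : realType} {n : nat} (g h : 'rV[R]_n -> R) (r : 'rV[R]_n -> \bar R)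
  (mu : R) (xs : 'rV[R]_n) :
  0 <= mu -> strongly_convex mu g -> convex_fun h -> proper_fun r -> convex_efun r ->
  r xs \is a fin_num ->
  (forall v, r v \is a fin_num -> g xs + (h xs + fine (r xs)) <= g v + (h v + fine (r v))) ->
  forall u, r u \is a fin_num ->
  g xs + (h xs + fine (r xs)) + mu / 2 * dot (u - xs) (u - xs) <= g u + (h u + fine (r u)).
Proof.
move=> mu0 Hsc Hh Hp Hr fxs Hmin u fu.
set D := dot (u - xs) (u - xs).
apply: (@lim_le _ _ _ (mu / 2 * D)); first by rewrite mulr_ge0 ?dot_ge0 // divr_ge0.
move=> e e0; exists 1 => // t t0 t1.
have [fw Hw] := @convD _ _ r u xs t Hp Hr fu fxs ltac:(by rewrite t0 t1).
have Hm := Hmin _ fw.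
have Hg := Hsc u xs t ltac:(by rewrite !ltW).
have Hhh := Hh u xs t ltac:(by rewrite !ltW).
rewrite enorm_sq -/D in Hg.
have H3 : t * (g xs + (h xs + fine (r xs)) + mu / 2 * D) <=
          t * (g u + (h u + fine (r u)) + e + t * (mu / 2 * D)).
  have : 0 <= t * e by rewrite mulr_ge0 // ltW.
  nra.
by move: H3; rewrite ler_pM2l.
Qed.

Lemma sumrule {R : realType} {n : nat} (g h : 'rV[R]_n -> R) (r : 'rV[R]_n -> \bar R)
  (G : 'rV[R]_n -> 'rV[R]_n) (x0 s : 'rV[R]_n) :
  is_gradient g G -> convex_fun h -> proper_fun r -> convex_efun r ->
  r x0 \is a fin_num ->
  (forall v, r v \is a fin_num ->
     g x0 + (h x0 + fine (r x0)) + dot s (v - x0) <= g v + (h v + fine (r v))) ->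
  forall u, r u \is a fin_num ->
  h x0 + fine (r x0) + dot (s - G x0) (u - x0) <= h u + fine (r u).
Proof.
move=> Hg Hh Hp Hr fx0 Hs u fu.
set d := u - x0.
apply: (@lim_le _ _ _ 0) => // e e0.
have [del del0 Hd] := grad_dir Hg x0 d _ e0.
exists (Order.min del 1); first by rewrite lt_min del0 ltr01.
move=> t t0 tlt.
have t1 : t < 1 by apply: lt_le_trans tlt (minr _ _).
have td : t < del by apply: lt_le_trans tlt (minl _ _).
have := Hd t t0 td.
have Ew : x0 + t *: d = t *: u + (1 - t) *: x0.
  by rewrite /d scalerBr scalerBl scale1r; apply/rowP => i; rewrite !mxE; ring.
rewrite Ew => /ler_normlP [_ H1].
have [fw Hw] := @convD _ _ r u x0 t Hp Hr fu fx0 ltac:(by rewrite t0 t1).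
have Hm := Hs _ fw.
have Hhh := Hh u x0 t ltac:(by rewrite !ltW).
have Ed : t *: u + (1 - t) *: x0 - x0 = t *: d.
  by rewrite /d; apply/rowP => i; rewrite !mxE; ring.
rewrite Ed dotZr in Hm.
rewrite dotBl mulr0 addr0.
have H3 : t * (h x0 + fine (r x0) + (dot s d - dot (G x0) d)) <=
          t * (h u + fine (r u) + e).
  nra.
by move: H3; rewrite ler_pM2l.
Qed.

Lemma dist_lt {R : realType} {n : nat} (S : set 'rV[R]_n) (e rho : R) :
  (dist0 S <= e%:E)%E -> 0 < rho -> exists s, S s /\ enorm s < e + rho.
Proof.
move=> H r0.
have : (dist0 S < (e + rho)%:E)%E.
  by apply: le_lt_trans H _; rewrite lte_fin ltrDl.
move=> /ereal_inf_lt [_ [s Ss <-]]; rewrite lte_fin => Hs.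
by exists s.
Qed.

Lemma fin_le {R : realType} {n : nat} (r : 'rV[R]_n -> \bar R) v (a b : R) :
  proper_fun r -> ((a%:E + r v) <= b%:E)%E -> r v \is a fin_num.
Proof.
move=> [_ Hp] H; rewrite fin_numE Hp /=.
apply/negP => /eqP E; move: H; rewrite E /=.
by rewrite addey.
Qed.

Lemma subd_real {R : realType} {n : nat} (h : 'rV[R]_n -> R) (r : 'rV[R]_n -> \bar R) x s :
  subdiff (fun v => ((h v)%:E + r v)%E) x s ->
  r x \is a fin_num /\ forall u, r u \is a fin_num ->
  h x + fine (r x) + dot s (u - x) <= h u + fine (r u).
Proof.
move=> [Hf Hs].
have fx : r x \is a fin_num by move: Hf; rewrite fin_numD => /andP[].
split => // u fu.
have := Hs u; rewrite -(fineK fx) -(fineK fu) -!EFinD lee_fin.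
by rewrite !fineK.
Qed.

Lemma subdF_real {R : realType} {n : nat} (g h : 'rV[R]_n -> R) (r : 'rV[R]_n -> \bar R) x s :
  subdiff (fun v => ((g v)%:E + ((h v)%:E + r v))%E) x s ->
  r x \is a fin_num /\ forall u, r u \is a fin_num ->
  g x + (h x + fine (r x)) + dot s (u - x) <= g u + (h u + fine (r u)).
Proof.
move=> [Hf Hs].
have fx : r x \is a fin_num by move: Hf; rewrite !fin_numD => /andP[_ /andP[]].
split => // u fu.
have := Hs u; rewrite -(fineK fx) -(fineK fu) -!EFinD lee_fin.
by rewrite !fineK.
Qed.

Lemma sp_bound {R : realType} (E : R) (k : nat) : 0 <= E ->
  \sum_(j < k) (E / (j.+1%:R) ^+ 2) <= 2 * E - 2 * E / (k.+1)%:R.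
Proof.
move=> E0; elim: k => [|k IH].
  by rewrite big_ord0 divr1 subrr.
rewrite big_ord_recr /=.
apply: (le_trans (lerD IH (lexx _))).
have k1 : (0 : R) < k.+1%:R by rewrite ltr0n.
have k2 : (0 : R) < k.+2%:R by rewrite ltr0n.
rewrite -subr_ge0.
have -> : 2 * E - 2 * E / k.+2%:R - (2 * E - 2 * E / k.+1%:R + E / k.+1%:R ^+ 2)
   = E * k%:R / (k.+1%:R ^+ 2 * k.+2%:R).
  have e1 : k.+1%:R = k%:R + 1 :> R by rewrite -addn1 natrD.
  have e2 : k.+2%:R = k%:R + 2 :> R by rewrite -addn2 natrD.
  have k0 : (0 : R) <= k%:R by rewrite ler0n.
  rewrite e1 e2; field.
  by rewrite !gt_eqF //; lra.
by rewrite divr_ge0 ?mulr_ge0 ?exprn_ge0 // ltW.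
Qed.

Lemma sp_props {R : realType} (E : R) : 0 <= E ->
  let sp := fun k : nat => \sum_(j < k) (E / (j.+1%:R) ^+ 2) in
  (forall k, sp k <= limn sp) /\ 0 <= limn sp.
Proof.
move=> E0 sp.
have hom : {homo sp : a b / (a <= b)%N >-> a <= b}.
  move=> a b ab; rewrite /sp -(subnKC ab) big_split_ord /= lerDl.
  by apply: sumr_ge0 => i _; rewrite divr_ge0 // exprn_ge0.
have cv : cvgn sp.
  apply: nondecreasing_is_cvgn => //; exists (2 * E) => _ [k _ <-].
  rewrite /sp; apply: (le_trans (@sp_bound _ E k E0)); rewrite gerBl divr_ge0 // mulr_ge0 //.
have H := nondecreasing_cvgn_le hom cv.
split => //; apply: le_trans (H 0%N); by rewrite /sp big_ord0.
Qed.

Lemma alpha_le1 {R : realType} (al eta ga gp mu L : R) :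
  0 < al -> 0 < eta -> eta <= L^-1 -> 0 < mu -> mu <= L -> mu <= ga ->
  gp = al ^+ 2 / eta -> gp = (1 - al) * ga + al * mu -> al <= 1.
Proof.
move=> a0 e0 eL m0 mL mg h1 h2.
have L0 : 0 < L by apply: lt_le_trans mL.
have em : eta * mu <= 1.
  have : eta * mu <= L^-1 * L by apply: ler_pM => //; apply: ltW.
  by rewrite mulVf ?gt_eqF.
have a2 : al ^+ 2 = eta * gp by rewrite h1; field; rewrite gt_eqF.
rewrite leNgt; apply/negP => a1.
have g1 : gp <= mu by rewrite h2; nra.
have : eta * gp <= eta * mu by rewrite ler_pM2l.
nra.
Qed.

Lemma coef_bound {R : realType} (al eta gp mu gdec Lg L : R) :
  0 < al -> 0 < eta -> gp = al ^+ 2 / eta -> mu <= gp -> gdec / Lg < eta ->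
  eta <= L^-1 -> 0 < mu -> 0 < gdec -> 0 < Lg -> 0 < L ->
  al / gp <= Num.sqrt (Lg / (gdec * mu)) / L.
Proof.
move=> a0 e0 hgp mg ge eL m0 g0 Lg0 L0.
have -> : al / gp = eta * al^-1 by rewrite hgp; field; rewrite !gt_eqF.
have ia : al^-1 <= Num.sqrt (Lg / (gdec * mu)).
  have ia0 : 0 <= al^-1 by rewrite invr_ge0 ltW.
  rewrite -(ger0_norm ia0) -sqrtr_sqr ler_sqrt; last by rewrite divr_ge0 ?mulr_ge0 // ltW.
  have a2 : gdec / Lg * mu <= al ^+ 2.
    have : gdec / Lg * mu <= eta * mu by rewrite ler_pM2r // ltW.
    move/le_trans; apply.
    have : al ^+ 2 = eta * gp by rewrite hgp; field; rewrite gt_eqF.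
    by move=> ->; rewrite ler_pM2l.
  rewrite exprVn.
  have p1 : 0 < gdec / Lg * mu by rewrite !mulr_gt0 // invr_gt0.
  have -> : Lg / (gdec * mu) = (gdec / Lg * mu)^-1 by field; rewrite !gt_eqF.
  by rewrite lef_pV2 // ?posrE ?exprn_gt0.
rewrite mulrC; apply: ler_pM => //; first by rewrite invr_ge0 ltW.
exact: ltW.
Qed.

Lemma coef_bound2 {R : realType} (al c q sk L : R) :
  0 < al -> al <= 1 -> 0 < c -> c < 1 -> 0 <= q -> q <= sk / L -> 0 < L ->
  q / (2 * (1 - c)) / (1 - (1 - c) * al) <= (1 - c * al) * (sk / (2 * (1 - c) ^+ 2 * L)) / c.
Proof.
move=> a0 a1 c0 c1 q0 qs L0.
have d0 : 0 < 1 - (1 - c) * al by nra.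
have c10 : 0 < 1 - c by lra.
have -> : (1 - c * al) * (sk / (2 * (1 - c) ^+ 2 * L)) / c
   = sk / L * ((1 - c * al) / (2 * (1 - c) ^+ 2 * c)).
  by field; rewrite !gt_eqF.
have -> : q / (2 * (1 - c)) / (1 - (1 - c) * al) = q * (1 / (2 * (1 - c) * (1 - (1 - c) * al))).
  by field; rewrite !gt_eqF.
have D1 : 0 < 2 * (1 - c) * (1 - (1 - c) * al) by rewrite !mulr_gt0.
have D2 : 0 < 2 * (1 - c) ^+ 2 * c by rewrite !mulr_gt0 // exprn_gt0.
apply: ler_pM => //; first by apply: divr_ge0 => //; apply: ltW.
rewrite -subr_ge0.
have -> : (1 - c * al) / (2 * (1 - c) ^+ 2 * c) - 1 / (2 * (1 - c) * (1 - (1 - c) * al))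
  = ((1 - c * al) * (1 - (1 - c) * al) - c * (1 - c)) / (2 * (1 - c) ^+ 2 * c * (1 - (1 - c) * al)).
  by field; rewrite !gt_eqF.
apply: divr_ge0; last by apply: ltW; rewrite !mulr_gt0 // exprn_gt0.
have -> : (1 - c * al) * (1 - (1 - c) * al) - c * (1 - c)
  = (1 - al) * (1 - c * (1 - c) * (1 + al)) by ring.
apply: mulr_ge0; first lra.
have : c * (1 - c) <= 1 / 4 by have := sqr_ge0 (2 * c - 1); lra.
nra.
Qed.

Lemma sq_aux {R : realType} (a b P : R) : 0 <= P ->
  (a / b * Num.sqrt P) ^+ 2 = a ^+ 2 * P / b ^+ 2.
Proof.
move=> P0; have e : P = Num.sqrt P ^+ 2 by rewrite sqr_sqrtr.
by rewrite [in RHS]e -exprVn; ring.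
Qed.
Arguments keyR {R n u y p s G gu gy gp Hu Hp mu eta}.
Arguments PhiR {R n G s x y u eta Hx Hu}.

Lemma sq_aux2 {R : realType} (a b : R) : 0 <= a -> 0 <= b ->
  (Num.sqrt a * Num.sqrt b) ^+ 2 = a * b.
Proof.
move=> a0 b0; have ea : a = Num.sqrt a ^+ 2 by rewrite sqr_sqrtr.
have eb : b = Num.sqrt b ^+ 2 by rewrite sqr_sqrtr.
by rewrite [in RHS]ea [in RHS]eb; ring.
Qed.

Lemma conv_norm {R : realType} {n : nat} (a b : 'rV[R]_n) (l Q : R) :
  0 <= l -> l <= 1 -> enorm a <= Q -> enorm b <= Q ->
  enorm (l *: a + (1 - l) *: b) <= Q.
Proof.
move=> l0 l1 ha hb.
apply: (le_trans (enorm_tri _ _)); rewrite !enormZ !ger0_norm //; last lra.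
have : l * enorm a <= l * Q by apply: ler_wpM2l.
have : (1 - l) * enorm b <= (1 - l) * Q by apply: ler_wpM2l => //; lra.
lra.
Qed.

Lemma aux_mu {R : realType} (mu A : R) : 0 < mu -> mu / 2 * (2 / mu * A) = A.
Proof. by move=> m0; field; rewrite gt_eqF. Qed.

Lemma final0 {R : realType} {n : nat} (a : R) (SF : set 'rV[R]_n) (L : R) : 0 < L ->
  (forall s, SF s -> a <= (2 * L)^-1 * enorm s ^+ 2) ->
  (a%:E <= ((2 * L)^-1)%:E * (dist0 SF * dist0 SF))%E.
Proof.
move=> L0 H.
have K0 : 0 < (2 * L)^-1 by rewrite invr_gt0 mulr_gt0.
have m0 : (0 <= dist0 SF)%E.
  by apply: le_ereal_inf_tmp => _ [s _ <-]; rewrite lee_fin enorm_ge0.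
case Em: (dist0 SF) => [m| |].
- rewrite -!EFinM lee_fin -expr2.
  have mm : 0 <= m by rewrite -lee_fin -Em.
  rewrite -[a]addr0 -[X in _ <= X]add0r.
  apply: sq_lim => //; first exact: ltW.
  move=> rho r0.
  have Hd : (dist0 SF <= m%:E)%E by rewrite Em.
  have [s [Ss Hs]] := @dist_lt _ _ _ _ _ Hd r0.
  rewrite add0r addr0; apply: (le_trans (H s Ss)); apply: ler_wpM2l; first exact: ltW.
  have e0 := enorm_ge0 s.
  rewrite !expr2; apply: ler_pM => //; exact: ltW.
- by rewrite mulyy mulry gtr0_sg // mul1e leey.
- by rewrite Em in m0.
Qed.

Lemma NT {R : realType} (Lg gdec c dk dk' ik ik' : R) :
  0 < Lg -> 0 < gdec -> gdec <= 1 -> 0 < c ->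
  0 <= dk / Num.sqrt c -> dk / Num.sqrt c <= dk' / Num.sqrt c ->
  0 <= ik -> ik <= Lg / gdec -> 0 <= ik' -> ik' <= Lg / gdec ->
  Lg * (dk / Num.sqrt c + dk' / Num.sqrt c) + ik * (2 * (dk / Num.sqrt c))
    + ik' * (dk / Num.sqrt c + dk' / Num.sqrt c)
  <= 3 * Lg * (dk + dk') / (gdec * Num.sqrt c).
Proof.
move=> L0 g0 g1 c0 q0 qq i0 iL i0' iL'.
have sc : 0 < Num.sqrt c by rewrite sqrtr_gt0.
set Qk := dk / Num.sqrt c in q0 qq *; set Qk' := dk' / Num.sqrt c in qq *.
have -> : 3 * Lg * (dk + dk') / (gdec * Num.sqrt c) = 3 * (Lg / gdec) * (Qk + Qk').
  by rewrite /Qk /Qk'; field; rewrite !gt_eqF.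
have LL : Lg <= Lg / gdec by rewrite ler_pdivlMr // ler_piMr // ltW.
set M := Lg / gdec in iL iL' LL *.
have h1 : Lg * (Qk + Qk') <= M * (Qk + Qk') by apply: ler_wpM2r => //; lra.
have h2 : ik * (2 * Qk) <= M * (2 * Qk) by apply: ler_wpM2r => //; lra.
have h3 : ik' * (Qk + Qk') <= M * (Qk + Qk') by apply: ler_wpM2r => //; lra.
have h4 : M * Qk <= M * Qk' by apply: ler_wpM2l => //; lra.
lra.
Qed.

Lemma enorm_v {R : realType} {n : nat} (e A B C D : 'rV[R]_n) :
  enorm (e + (A - B) + (C - D)) <= enorm e + enorm (A - B) + enorm C + enorm D.
Proof.
apply: (le_trans (enorm_tri _ _)).
have h1 := enorm_tri e (A - B).
have h2 := enorm_tri C (- D); rewrite enormN in h2.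
lra.
Qed.

Lemma enorm_dist {R : realType} {n : nat} (a b c : 'rV[R]_n) :
  enorm (a - b) <= enorm (a - c) + enorm (b - c).
Proof.
have -> : a - b = (a - c) + - (b - c) by apply/rowP => i; rewrite !mxE; ring.
by apply: (le_trans (enorm_tri _ _)); rewrite enormN.
Qed.

Lemma inv_le {R : realType} (gdec Lg et : R) : 0 < gdec -> 0 < Lg -> gdec / Lg < et ->
  et^-1 <= Lg / gdec.
Proof.
move=> g0 L0 h.
have p : 0 < gdec / Lg by rewrite divr_gt0.
have e0 : 0 < et by apply: lt_trans h.
have -> : Lg / gdec = (gdec / Lg)^-1 by rewrite invf_div.
by rewrite lef_pV2 ?posrE // ltW.
Qed.

Lemma half_le {R : realType} (et L : R) : 0 < L -> et <= L^-1 -> et / 2 <= (2 * L)^-1.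
Proof.
move=> L0 h; have -> : (2 * L)^-1 = L^-1 / 2 by rewrite invfM mulrC.
by rewrite ler_pM2r.
Qed.

Lemma sq_mono {R : realType} (u w : R) : 0 <= u -> u <= w -> u ^+ 2 <= w ^+ 2.
Proof. by move=> u0 uw; rewrite !expr2; apply: ler_pM. Qed.
Theorem lemma4p2 (R : realType) (n : nat)
  (g h : 'rV[R]_n -> R) (r : 'rV[R]_n -> \bar R)
  (dg dh : 'rV[R]_n -> 'rV[R]_n)
  (mu Lg Lh gdec Lund c : R)
  (xstar : 'rV[R]_n)
  (x z y : nat -> 'rV[R]_n) (eta alpha gamma eps : nat -> R) :
  (* standing assumptions on g, h, r *)
  0 < mu -> 0 < Lg ->
  convex_fun g -> strongly_convex mu g ->
  is_gradient g dg -> lipschitz_map Lg dg ->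
  convex_fun h -> is_gradient h dh -> lipschitz_map Lh dh ->
  proper_fun r -> closed_efun r -> convex_efun r ->
  let H := fun v => ((h v)%:E + r v)%E in
  let F := fun v => ((g v)%:E + H v)%E in
  (forall v, (F xstar <= F v)%E) ->
  0 < gdec < 1 -> 0 < Lund -> mu <= Lund -> Lund <= Lg ->
  (* the iAPG iterates *)
  x 0%N = z 0%N -> (r (x 0%N) < +oo)%E -> mu <= gamma 0%N ->
  (forall k, 0 < eta k /\ 0 < alpha k /\ 0 < gamma k /\ 0 <= eps k) ->
  (forall k, gdec / Lg < eta k <= Lund^-1) ->
  (forall k, gamma k.+1 = alpha k ^+ 2 / eta k /\
             gamma k.+1 = (1 - alpha k) * gamma k + alpha k * mu) ->
  (forall k, y k = (alpha k * gamma k + gamma k.+1)^-1 *: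
                   (alpha k * gamma k *: z k + gamma k.+1 *: x k)) ->
  (forall k, (dist0 [set (dg (y k) + (eta k)^-1 *: (x k.+1 - y k) + s)%R
                    | s in subdiff H (x k.+1)] <= (eps k)%:E)%E) ->
  (forall k, g (x k.+1) <= g (y k) + dot (dg (y k)) (x k.+1 - y k)
                          + (2 * eta k)^-1 * enorm (x k.+1 - y k) ^+ 2) ->
  (forall k, z k.+1 = x k + (alpha k)^-1 *: (x k.+1 - x k)) ->
  (* the tolerance schedule *)
  0 < c < 1 -> 0 < eps 0%N ->
  (forall k, (1 <= k)%N ->
     eps k = eps 0%N / k.+1%:R * Num.sqrt (\prod_(j < k) (1 - c * alpha j))) ->
  let kappa := Lg / (gdec * mu) in
  let psi0 := fine (F (x 0%N) - F xstar)%E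
              + (1 - (1 - c) * alpha 0%N) * (gamma 0%N / 2)
                * enorm (xstar - z 0%N) ^+ 2 in
  let S := Num.sqrt kappa / (2 * (1 - c) ^+ 2 * Lund)
           * \big[+%R/0%R]_(k <oo) (eps 0%N ^+ 2 / (k.+1%:R) ^+ 2) in
  let delta := fun k : nat =>
     Num.sqrt (\prod_(j < k) (1 - c * alpha j))
     * Num.sqrt (2 * (psi0 + S) / mu) in
  forall (k : nat) (xs : 'rV[R]_n),
    (* xs = x_*^{(k+1)} = argmin_x Phi(x; y^(k), eta_k) *)
    (forall v, (Phi dg h r xs (y k) (eta k) <= Phi dg h r v (y k) (eta k))%E) ->
    (Phi dg h r (x k) (y k) (eta k) - Phi dg h r xs (y k) (eta k) <=
      if k is k'.+1 then
        ((2 * Lund)^-1 *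
          (eps k' + 3 * Lg * (delta k + delta k') / (gdec * Num.sqrt c)) ^+ 2)%:E
      else
        ((2 * Lund)^-1)%:E * (dist0 (subdiff F (x 0%N)) * dist0 (subdiff F (x 0%N))))%E.
Proof.
move=> mu0 Lg0 Hgc Hgsc Hgg Hglip Hhc Hhg Hhlip Hrp Hrcl Hrc H F Hmin Hgd Hund1 Hund2 Hund3
  Hx0 Hrx0 Hg0 Hpos Heta Hgam Hy Hdist Hdesc Hz Hc Heps0 Heps kappa psi0 S delta k xs Hxs.
have [gd0 gd1] : 0 < gdec /\ gdec < 1 by move/andP: Hgd.
have [c0 c1] : 0 < c /\ c < 1 by move/andP: Hc.
have Lund0 : 0 < Lund by [].
pose fr v := fine (r v).
pose Fr v := g v + (h v + fr v).
have fx0 : r (x 0%N) \is a fin_num by apply: fin_of.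
have Fv : forall v, r v \is a fin_num -> F v = (Fr v)%:E.
  by move=> v fv; rewrite /F /H /Fr /fr -(fineK fv) -!EFinD fineK.
have fxst : r xstar \is a fin_num.
  apply: (@fin_le _ _ r xstar (g xstar + h xstar) (Fr (x 0%N))) => //.
  by rewrite EFinD -addeA -(Fv _ fx0); exact: Hmin.
have Fmin : forall v, r v \is a fin_num -> Fr xstar <= Fr v.
  by move=> v fv; rewrite -lee_fin -Fv // -Fv //.
have Hsub : forall j rho, 0 < rho -> r (x j.+1) \is a fin_num /\ exists s,
   (forall u, r u \is a fin_num ->
      h (x j.+1) + fr (x j.+1) + dot s (u - x j.+1) <= h u + fr u) /\
   enorm (dg (y j) + (eta j)^-1 *: (x j.+1 - y j) + s) < eps j + rho.
  move=> j rho r0.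
  have [_ [[s Hs <-] Hl]] := @dist_lt _ _ _ _ _ (Hdist j) r0.
  have [fxj Hsr] := @subd_real _ _ h r _ _ Hs.
  split => //; exists s; split => //.
have fxS : forall j, r (x j.+1) \is a fin_num by move=> j; case: (Hsub j 1 ltr01).
have fxa : forall j, r (x j) \is a fin_num by case.
have A1 : forall j, mu <= gamma j -> alpha j <= 1.
  move=> j mg; have [e0 [a0 _]] := Hpos j; have [h1 h2] := Hgam j.
  have /andP[_ eL] := Heta j.
  exact: (@alpha_le1 _ _ (eta j) (gamma j) (gamma j.+1) mu Lund).
have Gm : forall j, mu <= gamma j.
  elim=> [|j IH] //.
  have a1 := A1 j IH; have [_ h2] := Hgam j; have [_ [a0 _]] := Hpos j.
  rewrite h2; nra.
have Al1 : forall j, alpha j <= 1 by move=> j; apply: A1.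
pose Pk j := \prod_(i < j) (1 - c * alpha i).
pose Ph j := Fr (x j) - Fr xstar + gamma j / 2 * dot (xstar - z j) (xstar - z j).
pose sp j := \sum_(i < j) (eps 0%N ^+ 2 / (i.+1%:R) ^+ 2).
pose K0 := Num.sqrt kappa / (2 * (1 - c) ^+ 2 * Lund).
have Pk0 : forall j, 0 <= Pk j.
  move=> j; apply: prodr_ge0 => i _; have := Al1 i; nra.
have PkS : forall j, Pk j.+1 = Pk j * (1 - c * alpha j) by move=> j; rewrite /Pk big_ord_recr.
have eps2 : forall j, eps j ^+ 2 = eps 0%N ^+ 2 * Pk j / (j.+1%:R) ^+ 2.
  case=> [|j]; first by rewrite /Pk big_ord0 mulr1 mulr1n expr1n divr1.
  by rewrite Heps // sq_aux //; exact: (Pk0 j.+1).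
have Ph0 : forall j, 0 <= Ph j.
  move=> j; rewrite /Ph; have := Fmin _ (fxa j); have := dot_ge0 (xstar - z j).
  have [_ [_ [g0 _]]] := Hpos j; nra.
have step : forall j, (1 - (1 - c) * alpha j) * Ph j.+1 <= (1 - alpha j) * Ph j
     + alpha j / (2 * (1 - c) * gamma j.+1) * eps j ^+ 2.
  move=> j.
  have [e0 [a0 [g0 ep0]]] := Hpos j; have [h1 h2] := Hgam j.
  apply: sq_lim => //.
    apply: divr_ge0; first exact: ltW.
    by rewrite !mulr_ge0 //; [lra | apply: ltW; apply: lt_le_trans (Gm _)].
  move=> rho r0.
  have [_ [s [Hs He]]] := Hsub j rho r0.
  have Hsc := @sc_grad _ _ g dg mu (ltW mu0) Hgsc Hgg (y j).
  apply: (@step_lemma _ _ (x j) (z j) xstar (x j.+1) (y j)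
     (dg (y j) + (eta j)^-1 *: (x j.+1 - y j) + s) (z j.+1)
     (Fr (x j)) (Fr xstar) (Fr (x j.+1)) (alpha j) (eta j) (gamma j) (gamma j.+1) mu c (eps j + rho))
   => //; try exact: Al1.
  - exact: (keyR e0 (Hsc (x j)) (Hs _ (fxa j)) (Hdesc j)).
  - exact: (keyR e0 (Hsc xstar) (Hs _ fxst) (Hdesc j)).
  - exact: Fmin.
  - exact: ltW.
have Ind : forall j, Ph j <= Pk j * (Ph 0%N + K0 / c * sp j).
  elim=> [|j IH]; first by rewrite /Pk /sp !big_ord0 mul1r mulr0 addr0.
  have [e0 [a0 [g0 ep0]]] := Hpos j; have [h1 h2] := Hgam j.
  have [_ [_ [gp0 _]]] := Hpos j.+1.
  have st := step j.
  have a1 := Al1 j.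
  have d0 : 0 < 1 - (1 - c) * alpha j by nra.
  have d1 : 0 < 1 - c * alpha j by nra.
  have /andP[ge eL] := Heta j.
  have cb := @coef_bound _ (alpha j) (eta j) (gamma j.+1) mu gdec Lg Lund a0 e0 h1 (Gm j.+1) ge eL mu0 gd0 Lg0 Lund0.
  have q0 : 0 <= alpha j / gamma j.+1 by rewrite divr_ge0 // ltW.
  have cb2 := @coef_bound2 _ (alpha j) c (alpha j / gamma j.+1) (Num.sqrt (Lg / (gdec * mu))) Lund a0 a1 c0 c1 q0 cb Lund0.
  rewrite -/kappa -/K0 in cb2.
  set W := eps 0%N ^+ 2 * Pk j / (j.+1%:R) ^+ 2.
  have W0 : 0 <= W.
    by apply: divr_ge0; [apply: mulr_ge0; [exact: sqr_ge0 | exact: Pk0] | exact: sqr_ge0].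
  rewrite eps2 -/W in st.
  set q := alpha j / (2 * (1 - c) * gamma j.+1) in st.
  have qe : q = alpha j / gamma j.+1 / (2 * (1 - c)) by rewrite /q; field; rewrite !gt_eqF //; lra.
  set B := (1 - c * alpha j) * K0 / c in cb2.
  have qB : q <= (1 - (1 - c) * alpha j) * B.
    by rewrite mulrC -ler_pdivrMr // qe.
  have Phj := Ph0 j.
  have t1 : (1 - alpha j) * Ph j <= (1 - (1 - c) * alpha j) * ((1 - c * alpha j) * Ph j).
    rewrite mulrA; apply: ler_wpM2r => //; nra.
  have t2 : q * W <= (1 - (1 - c) * alpha j) * (B * W).
    rewrite mulrA; apply: ler_wpM2r => //.
  have t3 : Ph j.+1 <= (1 - c * alpha j) * Ph j + B * W.
    have := lerD t1 t2; rewrite -mulrDr => H3.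
    by rewrite -(ler_pM2l d0); exact: le_trans st H3.
  apply: (le_trans t3).
  have -> : sp j.+1 = sp j + eps 0%N ^+ 2 / (j.+1%:R) ^+ 2 by rewrite /sp big_ord_recr.
  rewrite PkS.
  have -> : Pk j * (1 - c * alpha j) * (Ph 0%N + K0 / c * (sp j + eps 0%N ^+ 2 / j.+1%:R ^+ 2))
     = (1 - c * alpha j) * (Pk j * (Ph 0%N + K0 / c * sp j)) + B * W.
    by rewrite /B /W; ring.
  by rewrite lerD2r ler_wpM2l // ltW.
have [spl sp0] := @sp_props _ (eps 0%N ^+ 2) (sqr_ge0 _).
have ES : S = K0 * limn sp by [].
have K00 : 0 <= K0.
  apply: divr_ge0; first exact: sqrtr_ge0.
  apply: mulr_ge0; last exact: ltW.
  by apply: mulr_ge0; [lra | exact: sqr_ge0].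
have A00 := Fmin _ fx0.
have B00 := dot_ge0 (xstar - z 0%N).
have a01 := Al1 0%N.
have [_ [a00 [g00 _]]] := Hpos 0%N.
have cPh0 : c * Ph 0%N <= psi0.
  rewrite /psi0 (Fv _ fx0) (Fv _ fxst) -EFinB /= enorm_sq /Ph.
  have cc : c <= 1 - (1 - c) * alpha 0%N by nra.
  set D := dot _ _.
  have h1 : 0 <= (1 - c) * (Fr (x 0%N) - Fr xstar) by apply: mulr_ge0; lra.
  have h2 : 0 <= (1 - (1 - c) * alpha 0%N - c) * (gamma 0%N / 2 * D).
    by apply: mulr_ge0; [lra | rewrite mulr_ge0 // divr_ge0 // ltW].
  lra.
have Ph00 := Ph0 0%N.
have S0 : 0 <= S by rewrite ES mulr_ge0.
have psiS0 : 0 <= psi0 + S by nra.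
have Bnd : forall j, Ph j <= Pk j * ((psi0 + S) / c).
  move=> j; apply: (le_trans (Ind j)); apply: ler_wpM2l => //.
  rewrite ES ler_pdivlMr // mulrDl.
  have : K0 / c * sp j * c <= K0 * limn sp.
    have -> : K0 / c * sp j * c = K0 * sp j by field; rewrite gt_eqF.
    apply: ler_wpM2l => //; exact: spl.
  rewrite mulrC in cPh0; lra.
pose Q j := delta j / Num.sqrt c.
have sc0 : 0 < Num.sqrt c by rewrite sqrtr_gt0.
have Q2 : forall j, Q j ^+ 2 = Pk j * (2 * (psi0 + S) / mu) / c.
  have M0 : 0 <= 2 * (psi0 + S) / mu.
    by apply: divr_ge0; [apply: mulr_ge0 | apply: ltW].
  move=> j; rewrite /Q /delta expr_div_n (@sq_aux2 _ _ _ (Pk0 j) M0) sqr_sqrtr //.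
  exact: ltW.
have Q0 : forall j, 0 <= Q j.
  move=> j; apply: divr_ge0; last exact: sqrtr_ge0.
  by apply: mulr_ge0; exact: sqrtr_ge0.
have normx : forall j, enorm (x j - xstar) <= Q j.
  move=> j; apply: enorm_le => //; rewrite Q2.
  have qg := @qgrowth _ _ g h r mu xstar (ltW mu0) Hgsc Hhc Hrp Hrc fxst (fun v fv => Fmin v fv) (x j) (fxa j).
  have h3 := Bnd j; have h2 := dot_ge0 (xstar - z j); have [_ [_ [gj _]]] := Hpos j.
  rewrite /Ph in h3.
  have h4 : mu / 2 * dot (x j - xstar) (x j - xstar) <= Pk j * ((psi0 + S) / c).
    have : 0 <= gamma j / 2 * dot (xstar - z j) (xstar - z j) by rewrite mulr_ge0 ?divr_ge0 // ltW.
    rewrite /Fr /fr in h3; lra.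
  have -> : Pk j * (2 * (psi0 + S) / mu) / c = 2 / mu * (Pk j * ((psi0 + S) / c)).
    by ring.
  rewrite -(ler_pM2l (_ : 0 < mu / 2)) ?divr_gt0 //.
  by rewrite aux_mu.
have normz : forall j, enorm (z j - xstar) <= Q j.
  move=> j; apply: enorm_le => //; rewrite Q2.
  have h3 := Bnd j; have h2 := Fmin _ (fxa j); have gm := Gm j.
  rewrite /Ph in h3.
  have D0 := dot_ge0 (z j - xstar).
  have Ez : dot (xstar - z j) (xstar - z j) = dot (z j - xstar) (z j - xstar).
    by rewrite -!enorm_sq enormB.
  rewrite Ez in h3.
  have h4 : mu / 2 * dot (z j - xstar) (z j - xstar) <= Pk j * ((psi0 + S) / c).
    have : mu / 2 * dot (z j - xstar) (z j - xstar) <= gamma j / 2 * dot (z j - xstar) (z j - xstar).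
      by apply: ler_wpM2r => //; rewrite ler_pM2r.
    lra.
  have -> : Pk j * (2 * (psi0 + S) / mu) / c = 2 / mu * (Pk j * ((psi0 + S) / c)).
    by ring.
  rewrite -(ler_pM2l (_ : 0 < mu / 2)) ?divr_gt0 //.
  by rewrite aux_mu.
have normy : forall j, enorm (y j - xstar) <= Q j.
  move=> j; have [_ [a0 [g0 _]]] := Hpos j; have [_ [_ [gp0 _]]] := Hpos j.+1.
  have den : 0 < alpha j * gamma j + gamma j.+1 by rewrite addr_gt0 ?mulr_gt0.
  have -> : y j - xstar = (alpha j * gamma j / (alpha j * gamma j + gamma j.+1)) *: (z j - xstar)
      + (1 - alpha j * gamma j / (alpha j * gamma j + gamma j.+1)) *: (x j - xstar).
    rewrite Hy; apply/rowP => i; rewrite !mxE; field; by rewrite gt_eqF.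
  apply: conv_norm => //.
    by rewrite divr_ge0 // ?mulr_ge0 // ltW.
  by rewrite ler_pdivrMr // mul1r lerDl ltW.
have Qmono : forall j, Q j.+1 <= Q j.
  move=> j; rewrite /Q; apply: ler_wpM2r; first by rewrite invr_ge0 sqrtr_ge0.
  rewrite /delta; apply: ler_wpM2r; first exact: sqrtr_ge0.
  apply: ler_wsqrtr; rewrite big_ord_recr /= -[X in _ <= X]mulr1.
  apply: ler_wpM2l; first exact: (Pk0 j).
  have [_ [a0 _]] := Hpos j; nra.
have PhiE : forall v yy et, r v \is a fin_num -> Phi dg h r v yy et =
   ((dot (dg yy) (v - yy) + (2 * et)^-1 * enorm (v - yy) ^+ 2 + h v) + fr v)%:E.
  by move=> v yy et fv; rewrite /Phi -[r v](fineK fv) -EFinD.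
have fxs : r xs \is a fin_num.
  apply: (@fin_le _ _ r xs (dot (dg (y k)) (xs - y k) + (2 * eta k)^-1 * enorm (xs - y k) ^+ 2 + h xs)
     ((dot (dg (y k)) (x k - y k) + (2 * eta k)^-1 * enorm (x k - y k) ^+ 2 + h (x k)) + fr (x k))) => //.
  by have := Hxs (x k); rewrite (PhiE _ _ _ (fxa k)).
rewrite (PhiE _ _ _ (fxa k)) (PhiE _ _ _ fxs) -EFinB.
destruct k as [|k'].
- have [e0 [a0 [g0 _]]] := Hpos 0%N; have [_ [_ [g1 _]]] := Hpos 1%N.
  have y0 : y 0%N = x 0%N.
    rewrite Hy -Hx0; apply/rowP => i; rewrite !mxE; field.
    by rewrite gt_eqF // addr_gt0 // mulr_gt0.
  rewrite y0; apply: final0 => // s Hs.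
  have [_ Hsr] := @subdF_real _ _ g h r (x 0%N) s Hs.
  have Hs2 := @sumrule _ _ g h r dg (x 0%N) s Hgg Hhc Hrp Hrc fx0 Hsr.
  have P := @PhiR _ _ (dg (x 0%N)) (s - dg (x 0%N)) (x 0%N) (x 0%N) xs (eta 0%N)
     (h (x 0%N) + fr (x 0%N)) (h xs + fr xs) e0 (Hs2 xs fxs).
  have ev : dg (x 0%N) + (eta 0%N)^-1 *: (x 0%N - x 0%N) + (s - dg (x 0%N)) = s.
    by apply/rowP => i; rewrite !mxE; ring.
  rewrite ev in P.
  have /andP[_ eL] := Heta 0%N.
  have hl := @half_le _ _ _ Lund0 eL.
  have : eta 0%N / 2 * enorm s ^+ 2 <= (2 * Lund)^-1 * enorm s ^+ 2.
    by apply: ler_wpM2r => //; exact: sqr_ge0.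
  lra.
- have [e0 [a0 [g0 ep0]]] := Hpos k'.+1.
  rewrite lee_fin -[X in _ <= X]add0r.
  have T0 : 0 <= 3 * Lg * (delta k'.+1 + delta k') / (gdec * Num.sqrt c).
    apply: divr_ge0; last by rewrite mulr_ge0 ?sqrtr_ge0 // ltW.
    apply: mulr_ge0; first by rewrite mulr_ge0 // ltW.
    by apply: addr_ge0; apply: mulr_ge0; exact: sqrtr_ge0.
  have K2 : 0 <= (2 * Lund)^-1 by apply: ltW; rewrite invr_gt0 mulr_gt0 // ?ltr0n.
  set T := 3 * Lg * (delta k'.+1 + delta k') / (gdec * Num.sqrt c) in T0 *.
  have [_ [_ [_ ep']]] := Hpos k'.
  apply: sq_lim; [exact: K2 | exact: addr_ge0 | ].
  move=> rho r0.
  have [_ [s [Hs He]]] := Hsub k' rho r0.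
  have P := @PhiR _ _ (dg (y k'.+1)) s (x k'.+1) (y k'.+1) xs (eta k'.+1)
     (h (x k'.+1) + fr (x k'.+1)) (h xs + fr xs) e0 (Hs xs fxs).
  set v := dg (y k'.+1) + (eta k'.+1)^-1 *: (x k'.+1 - y k'.+1) + s in P.
  set e' := dg (y k') + (eta k')^-1 *: (x k'.+1 - y k') + s in He.
  have ev : v = e' + (dg (y k'.+1) - dg (y k')) +
      ((eta k'.+1)^-1 *: (x k'.+1 - y k'.+1) - (eta k')^-1 *: (x k'.+1 - y k')).
    by rewrite /v /e'; apply/rowP => i; rewrite !mxE; ring.
  have [e0' _] := Hpos k'.
  have nv := enorm_v e' (dg (y k'.+1)) (dg (y k')) ((eta k'.+1)^-1 *: (x k'.+1 - y k'.+1))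
      ((eta k')^-1 *: (x k'.+1 - y k')).
  have ip1 : 0 <= (eta k'.+1)^-1 by rewrite invr_ge0 ltW.
  have ip2 : 0 <= (eta k')^-1 by rewrite invr_ge0 ltW.
  rewrite -ev !enormZ (ger0_norm ip1) (ger0_norm ip2) in nv.
  have lip := Hglip (y k'.+1) (y k').
  have dy : enorm (y k'.+1 - y k') <= Q k'.+1 + Q k'.
    by apply: (le_trans (enorm_dist _ _ xstar)); apply: lerD.
  have dxk : enorm (x k'.+1 - y k'.+1) <= 2 * Q k'.+1.
    apply: (le_trans (enorm_dist _ _ xstar)); have := normx k'.+1; have := normy k'.+1; lra.
  have dxk' : enorm (x k'.+1 - y k') <= Q k'.+1 + Q k'.
    by apply: (le_trans (enorm_dist _ _ xstar)); apply: lerD.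
  have /andP[ge1 eL1] := Heta k'.+1; have /andP[ge2 _] := Heta k'.
  have i1 := @inv_le _ _ _ _ gd0 Lg0 ge1.
  have i2 := @inv_le _ _ _ _ gd0 Lg0 ge2.
  have NTb := @NT _ Lg gdec c (delta k'.+1) (delta k') (eta k'.+1)^-1 (eta k')^-1
     Lg0 gd0 (ltW gd1) c0 (Q0 k'.+1) (Qmono k') ip1 i1 ip2 i2.
  have b1 : Lg * enorm (y k'.+1 - y k') <= Lg * (Q k'.+1 + Q k') by apply: ler_wpM2l => //; exact: ltW.
  have b2 : (eta k'.+1)^-1 * enorm (x k'.+1 - y k'.+1) <= (eta k'.+1)^-1 * (2 * Q k'.+1).
    exact: ler_wpM2l.
  have b3 : (eta k')^-1 * enorm (x k'.+1 - y k') <= (eta k')^-1 * (Q k'.+1 + Q k').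
    exact: ler_wpM2l.
  have nvb : enorm v <= eps k' + T + rho.
    rewrite /Q in b1 b2 b3; rewrite /T; lra.
  have sq := @sq_mono _ _ _ (enorm_ge0 v) nvb.
  have hl := @half_le _ _ _ Lund0 eL1.
  have : eta k'.+1 / 2 * enorm v ^+ 2 <= (2 * Lund)^-1 * enorm v ^+ 2.
    by apply: ler_wpM2r => //; exact: sqr_ge0.
  have : (2 * Lund)^-1 * enorm v ^+ 2 <= (2 * Lund)^-1 * (eps k' + T + rho) ^+ 2.
    by apply: ler_pM; [exact: K2 | exact: sqr_ge0 | exact: lexx | exact: sq].
  rewrite add0r; lra.
Qed.
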